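(* Assume $E\setminus T\neq\emptyset$. In the SimpleSolver process, every $f_i$ is feasible and for every $i\ge 0$, \[ \mathbb{E}\big[\xi_r(f_i)\big]-\xi_r(f^* )\le\Big(1-\frac{1}{\tau}\Big)^{i}\big(\xi_r(f_0)-\xi_r(f^* )\big). \]
   Context: Let $G=(V,E,w)$ be a connected undirected graph with edge weights $w_e>0$ and resistances $r_e=1/w_e$. Each edge has a fixed orientation $(a,b)$; for $f\in\mathbb{R}^E$ write $f(b,a):=-f(a,b)$. The incidence matrix $B\in\mathbb{R}^{E\times V}$ has $B_{(a,b),c}=1$ if $c=a$, $-1$ if $c=b$, $0$ otherwise; $R=\mathrm{diag}(r_e)_{e\in E}$. The energy of $f\in\mathbb{R}^E$ is $\xi_r(f)=f^TRf$. Fix $\chi\in\mathbb{R}^V$ with $\sum_a\chi(a)=0$; $f$ is feasible if $B^Tf=\chi$; $f^*$ is the unique feasible $f$ minimizing $\xi_r(f)$. Let $T\subseteq E$ be a spanning tree. For vertices $a,b$, $\pi_{(a,b)}\in\mathbb{R}^E$ is the unit flow from $a$ to $b$ along the unique $a$–$b$ path in $T$. For $e=(a,b)\in E\setminus T$, the tree cycle vector is $c_e=\mathbf{1}_e-\pi_{(a,b)}$, $R_e=c_e^TRc_e$, and $\Delta_e(f)=f^TRc_e$. The tree condition number is $\tau=\sum_{e\in E\setminus T}R_e/r_e$. Let $p$ be the probability distribution on $E\setminus T$ with $p_e=\frac{R_e}{r_e\tau}$. The SimpleSolver process: $f_0$ is the unique feasible flow supported on $T$; for $i\ge1$, $e_i$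 is drawn from $p$ independently of everything else and $f_i=f_{i-1}-\frac{\Delta_{e_i}(f_{i-1})}{R_{e_i}}c_{e_i}$. *)

(* Defs.v *)
From HB Require Import structures.
From mathcomp Require Import all_boot all_order all_algebra.
From Stdlib Require Import ClassicalEpsilon.
Set Implicit Arguments. Unset Strict Implicit. Unset Printing Implicit Defensive.
Import Order.TTheory GRing.Theory Num.Theory.
Local Open Scope ring_scope.

Section Electrical.
Variables (R : realFieldType) (V E : finType) (src dst : E -> V).

Definition step_start (s : E * bool) : V := if s.2 then src s.1 else dst s.1.
Definition step_end (s : E * bool) : V := if s.2 then dst s.1 else src s.1.

Fixpoint is_walk (S : {set E}) (x b : V) (p : seq (E * bool)) : bool :=
  match p with
  | [::] => x == b
  | s :: p' => [&& s.1 \in S, step_start s == x & is_walk S (step_end s) b p']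
  end.

Definition is_simple_path (S : {set E}) (a b : V) (p : seq (E * bool)) : bool :=
  is_walk S a b p && uniq (a :: map step_end p).

Definition is_cycle (S : {set E}) (x : V) (p : seq (E * bool)) : bool :=
  [&& (0 < size p)%N, is_walk S x x p, uniq (map fst p) & uniq (map step_end p)].

Definition connected_in (S : {set E}) : Prop :=
  forall a b : V, exists p, is_walk S a b p.

Definition acyclic (S : {set E}) : Prop :=
  forall x p, ~~ is_cycle S x p.

Definition spanning_tree (T : {set E}) : Prop := connected_in T /\ acyclic T.

Definition walk_flow (p : seq (E * bool)) (e : E) : R :=
  \sum_(s <- p | s.1 == e) (if s.2 then 1 else -1).

Definition tree_path_flow (T : {set E}) (a b : V) : E -> R :=
  walk_flow (epsilon (inhabits [::]) (fun p => is_simple_path T a b p)).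

Definition indicator (e : E) : E -> R := fun e' => if e' == e then 1 else 0.

Definition incidence (e : E) (c : V) : R :=
  if c == src e then 1 else if c == dst e then -1 else 0.

Definition divergence (f : E -> R) (c : V) : R := \sum_e incidence e c * f e.

Definition feasible (chi : V -> R) (f : E -> R) : Prop :=
  forall c, divergence f c = chi c.

Variable (r : E -> R).

Definition energy (f : E -> R) : R := \sum_e r e * f e ^+ 2.

Variable (T : {set E}).

Definition cycle_vec (e : E) : E -> R :=
  fun e' => indicator e e' - tree_path_flow T (src e) (dst e) e'.

Definition cycle_res (e : E) : R := \sum_e' r e' * cycle_vec e e' ^+ 2.

Definition Delta (e : E) (f : E -> R) : R := \sum_e' f e' * r e' * cycle_vec e e'.

Definition tau : R := \sum_(e | e \notin T) cycle_res e / r e.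

Definition prob (e : E) : R := if e \in T then 0 else cycle_res e / (r e * tau).

Definition solver_step (f : E -> R) (e : E) : E -> R :=
  fun e' => f e' - Delta e f / cycle_res e * cycle_vec e e'.

Definition solver_iter (f0 : E -> R) (s : seq E) : E -> R := foldl solver_step f0 s.

(* E[xi_r(f_i)] : expectation over the i independent draws from p *)
Definition expected_energy (f0 : E -> R) (i : nat) : R :=
  \sum_(t : i.-tuple E) (\prod_(e <- t) prob e) * energy (solver_iter f0 t).

End Electrical.

(* Main.v *)
Require Import Defs.
From HB Require Import structures.
From Stdlib Require Import ClassicalEpsilon.
From mathcomp Require Import all_boot all_order all_algebra zify ring lra.
Import Order.TTheory GRing.Theory Num.Theory.
Set Implicit Arguments. Unset Strict Implicit. Unset Printing Implicit Defensive.

Section Graph.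
Variables (V E : finType) (src dst : E -> V).
Hypothesis Hne : forall e, src e != dst e.
Local Notation sst := (step_start src dst).
Local Notation sen := (step_end src dst).
Local Notation walk := (is_walk src dst).

Lemma walk_cat S x b p1 p2 : walk S x b (p1 ++ p2) =
  walk S x (last x (map sen p1)) p1 && walk S (last x (map sen p1)) b p2.
Proof.
elim: p1 x => [|s p IH] x /=; first by rewrite eqxx.
by rewrite IH !andbA.
Qed.

Lemma walk_last (S : {set E}) x b p : walk S x b p -> last x (map sen p) = b.
Proof.
elim: p x => [|s p IH] x /=; first by move/eqP.
by case/and3P => _ _ /IH.
Qed.

Lemma nth_vs y x p i : (i <= size p)%N ->
  nth y (x :: map sen p) i = last x (map sen (take i p)).
Proof.
elim: p x i => [|s p IH] x [|i] //= Hi.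
by rewrite IH.
Qed.

Lemma walk_sub (S S' : {set E}) x b p : S \subset S' -> walk S x b p -> walk S' x b p.
Proof.
move=> sub; elim: p x => [|s p IH] x //=.
case/and3P => H1 H2 H3; rewrite (subsetP sub _ H1) H2 /=; exact: IH.
Qed.

Lemma walk_nth (S : {set E}) x b p s0 i : (i < size p)%N -> walk S x b p ->
  [/\ (nth s0 p i).1 \in S, sst (nth s0 p i) = nth x (x :: map sen p) i
    & sen (nth s0 p i) = nth x (x :: map sen p) i.+1].
Proof.
elim: p x i => [|s p IH] x [|i] //= Hi; case/and3P => H1 /eqP H2 H3.
  split => //; by case: p {IH H3 Hi}.
have [A B C] := IH _ _ Hi H3; split => //.
  by rewrite B; apply: set_nth_default; rewrite /= size_map ltnW.
by rewrite C /=; apply: set_nth_default; rewrite size_map.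
Qed.
Lemma exists_simple S a b : (exists p, walk S a b p) ->
  exists p, is_simple_path src dst S a b p.
Proof.
case=> p; move: {2}(size p) (leqnn (size p)) => n; elim: n p => [|n IH] p.
  by rewrite leqn0 => /eqP/size0nil -> Hw; exists [::]; rewrite /is_simple_path Hw.
move=> Hs Hw; case Hu: (uniq (a :: map sen p)).
  by exists p; rewrite /is_simple_path Hw Hu.
move/negbT: Hu => /(uniqPn a) [i [j [ij jlt eqij]]].
rewrite /= size_map ltnS in jlt.
have ilt : (i <= size p)%N by apply: ltnW; apply: leq_trans ij jlt.
rewrite !nth_vs // in eqij.
apply: (IH (take i p ++ drop j p)).
  rewrite size_cat size_take size_drop.
  case: ltnP => Hi; lia.
rewrite walk_cat.
move: (Hw); rewrite -{1}(cat_take_drop i p) walk_cat => /andP [-> _] /=.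
move: (Hw); rewrite -{1}(cat_take_drop j p) walk_cat => /andP [_].
by rewrite eqij.
Qed.

Lemma walk_catI (S : {set E}) x y b p1 p2 : walk S x y p1 -> walk S y b p2 -> walk S x b (p1 ++ p2).
Proof. by move=> H1 H2; rewrite walk_cat (walk_last H1) H1. Qed.

Lemma step_edge (s1 s2 : E * bool) : s1.1 = s2.1 ->
  (sst s1 = sst s2 /\ sen s1 = sen s2) \/ (sst s1 = sen s2 /\ sen s1 = sst s2).
Proof.
case: s1 s2 => [e1 b1] [e2 b2] /= ->; rewrite /step_start /step_end /=.
by case: b1; case: b2; auto.
Qed.

Lemma simple_edges_uniq (S : {set E}) x b p : walk S x b p -> uniq (x :: map sen p) ->
  uniq (map fst p).
Proof.
case: p => [//|s0 p0]; set p := s0 :: p0 => Hw Hu.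
case Hm: (uniq (map fst p)) => //; move/negbT: Hm => /(uniqPn s0.1) [i [j [ij jlt eq]]].
rewrite size_map in jlt; have ilt := ltn_trans ij jlt.
rewrite !(nth_map s0) // in eq.
have [A1 B1 C1] := walk_nth s0 ilt Hw; have [A2 B2 C2] := walk_nth s0 jlt Hw.
have sz : size (x :: map sen p) = (size p).+1 by rewrite /= size_map.
case: (step_edge eq) => [[_ E2]|[E1 _]].
  move: E2; rewrite C1 C2 => /eqP; rewrite nth_uniq ?sz ?ltnS // => /eqP [] ij'.
  by rewrite ij' ltnn in ij.
move: E1; rewrite B1 C2 => /eqP; rewrite nth_uniq ?sz ?ltnS //; last exact: ltnW.
by move/eqP => ij'; rewrite ij' ltnNge leqnSn in ij.
Qed.

Lemma forest_nb (S : {set E}) : (forall x p, ~~ is_cycle src dst S x p) ->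
  (forall s, s.1 \in S -> exists s', [/\ s'.1 \in S, s'.1 != s.1 & sst s' = sen s]) ->
  forall e, e \notin S.
Proof.
move=> Hac HP e0; apply/negP => He0; set s0 := (e0, true).
suff: forall n x b p, (#|V| - size p < n)%N -> (0 < size p)%N -> walk S x b p ->
   uniq (x :: map sen p) -> False.
  move/(_ #|V|.+1 (src e0) (dst e0) [:: (e0,true)]); apply => //=.
    lia.
    by rewrite /step_start /step_end /= He0 !eqxx.
  by rewrite /step_end /= inE Hne.
elim=> [|n IH] x b p //.
move=> Hn Hp Hw Hu.
have sz : size (x :: map sen p) = (size p).+1 by rewrite /= size_map.
set m := (size p).-1; have Hm : (m < size p)%N by rewrite /m prednK.
set s := nth s0 p m.
have [As _ Cs] := walk_nth s0 Hm Hw.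
have Hb : nth x (x :: map sen p) (size p) = b.
  by rewrite nth_vs // take_size (walk_last Hw).
have sb : sen s = b by rewrite Cs /m prednK.
have [s' [Hs'S Hs'ne Hs'st]] := HP s As.
set u := sen s'.
have Hws' : walk S b u [:: s'] by rewrite /= Hs'S Hs'st sb !eqxx.
case Hin: (u \in x :: map sen p); last first.
  apply: (IH x u (p ++ [:: s'])); last first.
  - by rewrite map_cat cats1 -rcons_cons rcons_uniq Hin Hu.
  - exact: walk_catI Hw Hws'.
  - by rewrite size_cat addn1.
  have Hc : ((size p).+2 <= #|V|)%N.
    have : uniq (rcons (x :: map sen p) u) by rewrite rcons_uniq Hin Hu.
    move/card_uniqP; rewrite size_rcons /= size_map => <-; exact: max_card.
  rewrite size_cat /=.
  have ar : forall a c d, (d - a < c.+1 -> a.+2 <= d -> d - (a+1) < c)%N by move=> *; lia.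
  exact: ar Hn Hc.
set vs := x :: map sen p.
set k := index u vs.
have Hk : (k < size vs)%N by rewrite index_mem.
have Hku : nth x vs k = u by rewrite nth_index.
have Hk' : (k <= size p)%N by rewrite -ltnS -sz.
apply: (negP (Hac u (drop k p ++ [:: s']))).
rewrite /is_cycle size_cat addn1 /=.
apply/and3P; split.
- apply: walk_catI _ Hws'.
  move: Hw; rewrite -{1}(cat_take_drop k p) walk_cat => /andP [_].
  by rewrite -(nth_vs x) // Hku.
- rewrite map_cat cats1 rcons_uniq; apply/andP; split; last first.
    by rewrite map_drop drop_uniq //; exact: simple_edges_uniq Hw Hu.
  apply/negP => /mapP [t] /(nthP s0) [i Hi <-] teq.
  rewrite size_drop in Hi.
  rewrite nth_drop in teq; set j := (k + i)%N in teq.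
  have Hj : (j < size p)%N by rewrite /j -ltn_subRL.
  have [_ B C] := walk_nth s0 Hj Hw.
  case: (step_edge teq) => [[E1 _]|[E1 E2]].
    move: E1; rewrite Hs'st sb B -{1}Hb => /eqP; rewrite nth_uniq ?sz //; last by rewrite ltnW.
    by move/eqP => HH; rewrite HH ltnn in Hj.
  move: E1; rewrite Hs'st sb C -{1}Hb => /eqP; rewrite nth_uniq ?sz ?ltnS //.
  move/eqP => Hjm.
  move: E2; rewrite B -/u -Hku => /eqP; rewrite nth_uniq ?sz //; last by rewrite ltnW.
  move/eqP => Hjk.
  have jm : j = m by rewrite /m Hjm.
  by move: Hs'ne; rewrite teq -/j jm eqxx.
- rewrite map_cat cats1 rcons_uniq map_drop.
  have -> : drop k (map sen p) = drop k.+1 vs by [].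
  move: (drop_uniq k Hu); rewrite -/vs (drop_nth x Hk) Hku /= => /andP [-> ->] //.
Qed.
End Graph.
Local Open Scope ring_scope.

Section Alg.
Variables (R : realFieldType) (V E : finType) (src dst : E -> V).
Hypothesis Hne : forall e, src e != dst e.
Local Notation inc := (incidence R src dst).
Local Notation div := (divergence src dst).
Local Notation sst := (step_start src dst).
Local Notation sen := (step_end src dst).

Lemma incE e c : inc e c = (c == src e)%:R - (c == dst e)%:R.
Proof.
rewrite /incidence; have H := Hne e.
case: (c =P src e) => [->|_]; first by rewrite (negbTE H) /= subr0.
by case: (c =P dst e) => _ /=; ring.
Qed.

Lemma div_walk (S : {set E}) a b p c : is_walk src dst S a b p ->
  div (walk_flow R p) c = (c == a)%:R - (c == b)%:R.
Proof.
elim: p a => [|s p IH] a /=.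
  move/eqP ->; rewrite subrr /divergence big1 // => e _.
  by rewrite /walk_flow big_nil mulr0.
case/and3P => _ /eqP Hs Hw.
have -> : div (walk_flow R (s :: p)) c =
    inc s.1 c * (if s.2 then 1 else -1) + div (walk_flow R p) c.
  rewrite /divergence.
  transitivity (\sum_e (inc e c * (if s.1 == e then (if s.2 then 1 else -1) else 0)
      + inc e c * walk_flow R p e)).
    apply: eq_bigr => e _; rewrite /walk_flow big_cons.
    by case: (s.1 == e); rewrite ?mulrDr ?mulr0 ?add0r.
  rewrite big_split /=; congr (_ + _).
  rewrite (bigD1 s.1) //= eqxx big1 ?addr0 // => e /negbTE.
  by rewrite eq_sym => ->; rewrite mulr0.
rewrite (IH _ Hw) -Hs incE.
case: s {Hs Hw} => e [] /=; rewrite /step_start /step_end /=; ring.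
Qed.

Lemma walk_flow_out (S : {set E}) a b p e : is_walk src dst S a b p -> e \notin S ->
  walk_flow R p e = 0.
Proof.
elim: p a => [|s p IH] a /=; first by rewrite /walk_flow big_nil.
case/and3P => Hs _ Hw He; rewrite /walk_flow big_cons.
have -> : (s.1 == e) = false by apply/negP => /eqP Heq; rewrite -Heq Hs in He.
exact: IH Hw He.
Qed.

Lemma tpf_walk (T : {set E}) a b : connected_in src dst T ->
  is_walk src dst T a b (epsilon (inhabits [::]) (fun p => is_simple_path src dst T a b p)).
Proof.
move=> Hc.
have := epsilon_spec (inhabits [::]) (fun p => is_true (is_simple_path src dst T a b p))
   (@exists_simple _ _ src dst T a b (Hc a b)).
by case/andP.
Qed.

Lemma cyc_circ (T : {set E}) e c : connected_in src dst T ->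
  div (cycle_vec R src dst T e) c = 0.
Proof.
move=> Hc; rewrite /divergence /cycle_vec.
under eq_bigr => e' _ do rewrite mulrBr.
rewrite sumrB.
have -> : \sum_e' inc e' c * tree_path_flow R src dst T (src e) (dst e) e' =
   div (tree_path_flow R src dst T (src e) (dst e)) c by [].
rewrite /tree_path_flow (div_walk _ (tpf_walk _ _ Hc)).
rewrite (bigD1 e) //= /indicator eqxx mulr1 big1 ?addr0 ?incE ?subrr // => e' /negbTE ->.
by rewrite mulr0.
Qed.

Lemma cyc_out (T : {set E}) e e' : connected_in src dst T -> e' \notin T ->
  cycle_vec R src dst T e e' = indicator R e e'.
Proof.
move=> Hc He'; rewrite /cycle_vec /tree_path_flow.
by rewrite (walk_flow_out (tpf_walk _ _ Hc) He') subr0.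
Qed.

Lemma circ_zero (T : {set E}) (h : E -> R) : acyclic src dst T ->
  (forall c, div h c = 0) -> (forall e, e \notin T -> h e = 0) -> forall e, h e = 0.
Proof.
move=> Hac Hc Hout e0.
suff: e0 \notin [set e | h e != 0] by rewrite inE negbK => /eqP.
apply: (@forest_nb _ _ src dst Hne).
- move=> x p; apply/negP => Hcy; apply: (negP (Hac x p)).
  move: Hcy; rewrite /is_cycle => /and4P [-> Hw -> ->]; rewrite andbT /=.
  rewrite andbT; apply: walk_sub Hw; apply/subsetP => e; rewrite inE; apply: contraR => /Hout ->.
  by rewrite eqxx.
move=> s; rewrite inE => Hs; set v := sen s.
have Hv : inc s.1 v != 0.
  rewrite incE /v /step_end; case: (s) => e [] /=; rewrite eqxx.
    by rewrite [dst e == _]eq_sym (negbTE (Hne e)) /= sub0r oppr_eq0 oner_eq0.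
  by rewrite (negbTE (Hne e)) /= subr0 oner_eq0.
case: (boolP [exists e, (e != s.1) && (inc e v * h e != 0)]) => [|Hno].
  case/existsP => e /andP [ne Hnz]; move: Hnz; rewrite mulf_eq0 negb_or => /andP [Hi Hh].
  exists (e, v == src e); split; rewrite ?inE //=.
  move: Hi; rewrite incE /step_start /=; case: (v =P src e) => [->//|_].
  by case: (v =P dst e) => [->//|_]; rewrite subrr eqxx.
exfalso; move: (Hc v); rewrite /divergence (bigD1 s.1) //= big1.
  by rewrite addr0 => /eqP; rewrite mulf_eq0 (negbTE Hv) (negbTE Hs).
move=> e ne; move/existsPn: Hno => /(_ e); rewrite ne /= negbK => /eqP //.
Qed.
End Alg.

Section Energy.
Variables (R : realFieldType) (V E : finType) (src dst : E -> V).
Hypothesis Hne : forall e, src e != dst e.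
Variables (r : E -> R) (T : {set E}) (chi : V -> R) (fstar : E -> R).
Hypothesis Hr : forall e, 0 < r e.
Hypothesis Hcon : connected_in src dst T.
Hypothesis Hac : acyclic src dst T.
Hypothesis Hfs : feasible src dst chi fstar.
Hypothesis Hmin : forall f, feasible src dst chi f -> energy r fstar <= energy r f.
Local Notation div := (divergence src dst).
Local Notation cyc := (cycle_vec R src dst T).
Local Notation Dl := (Delta src dst r T).
Local Notation Res := (cycle_res src dst r T).

Lemma div_lin (f g : E -> R) k c : div (fun e => f e - k * g e) c = div f c - k * div g c.
Proof. by rewrite /divergence mulr_sumr -sumrB; apply: eq_bigr => e _; ring. Qed.

Lemma div_add (f g : E -> R) k c : div (fun e => f e + k * g e) c = div f c + k * div g c.
Proof. by rewrite /divergence mulr_sumr -big_split; apply: eq_bigr => e _ /=; ring. Qed.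

Lemma div_sub (f g : E -> R) c : div (fun e => f e - g e) c = div f c - div g c.
Proof. by rewrite /divergence -sumrB; apply: eq_bigr => e _; ring. Qed.

Lemma opt (h : E -> R) : (forall c, div h c = 0) -> \sum_e r e * fstar e * h e = 0.
Proof.
move=> Hh.
set a := \sum_e r e * fstar e * h e.
set b := \sum_e r e * h e ^+ 2.
have Hb : 0 <= b by apply: sumr_ge0 => e _; rewrite mulr_ge0 ?sqr_ge0 ?ltW.
have key t : 0 <= 2 * t * a + t ^+ 2 * b.
  have := Hmin (f := fun e => fstar e + t * h e) _.
  have -> : energy r (fun e => fstar e + t * h e) = energy r fstar + (2 * t * a + t ^+ 2 * b).
    rewrite /energy /a /b !mulr_sumr -!big_split; apply: eq_bigr => e _ /=; ring.
  rewrite lerDl; apply=> c; by rewrite div_add Hfs Hh mulr0 addr0.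
set d := b + 1.
have dpos : 0 < d by rewrite /d; lra.
set t := - a / d.
have td : t * d = - a by rewrite /t mulrAC -mulrA divff ?mulr1 // gt_eqF.
have : 0 <= (2 * t * a + t ^+ 2 * b) * d ^+ 2 by rewrite mulr_ge0 ?sqr_ge0 ?key.
have -> : (2 * t * a + t ^+ 2 * b) * d ^+ 2 = 2 * (t * d) * a * d + (t * d) ^+ 2 * b by ring.
rewrite td.
have -> : 2 * - a * a * d + (- a) ^+ 2 * b = - (a ^+ 2 * (b + 2)) by rewrite /d; ring.
rewrite oppr_ge0 pmulr_lle0; last by lra.
move=> Ha; have : a ^+ 2 = 0 by apply/le_anti; rewrite Ha sqr_ge0.
by move/eqP; rewrite sqrf_eq0 => /eqP.
Qed.

Lemma quad (f c : E -> R) k : \sum_e r e * (f e - k * c e) ^+ 2 =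
  \sum_e r e * f e ^+ 2 - 2 * k * (\sum_e f e * r e * c e) + k ^+ 2 * \sum_e r e * c e ^+ 2.
Proof. by rewrite !mulr_sumr -sumrB -big_split; apply: eq_bigr => e _ /=; ring. Qed.

Lemma energy_step f e : Res e != 0 ->
  energy r (solver_step src dst r T f e) = energy r f - Dl e f ^+ 2 / Res e.
Proof.
move=> H; rewrite /energy /solver_step quad.
rewrite -/(Dl e f) -/(Res e) -/(energy r f).
by field.
Qed.

Lemma cyc_self e : e \notin T -> cyc e e = 1.
Proof. by move=> He; rewrite cyc_out // /indicator eqxx. Qed.

Lemma res_ge e : e \notin T -> r e <= Res e.
Proof.
move=> He; rewrite /cycle_res (bigD1 e) //= cyc_self // expr1n mulr1 lerDl.
by apply: sumr_ge0 => e' _; rewrite mulr_ge0 ?sqr_ge0 ?ltW.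
Qed.

Lemma Delta_star e : Dl e fstar = 0.
Proof.
rewrite /Delta -[RHS](opt (h := cyc e)); last by move=> c; exact: cyc_circ.
by apply: eq_bigr => e' _; ring.
Qed.

Lemma decomp (g : E -> R) : (forall c, div g c = 0) ->
  forall e', g e' = \sum_(e | e \notin T) g e * cyc e e'.
Proof.
move=> Hg e'; apply/eqP; rewrite -subr_eq0; apply/eqP.
apply: (circ_zero Hne (h := fun e' => g e' - \sum_(e | e \notin T) g e * cyc e e') Hac).
- move=> c; rewrite /divergence.
  under eq_bigr => x _ do rewrite mulrBr mulr_sumr.
  rewrite sumrB exchange_big /=.
  rewrite -/(div g c) Hg sub0r big1 ?oppr0 // => e _.
  transitivity (g e * div (cyc e) c).
    by rewrite /divergence mulr_sumr; apply: eq_bigr => x _; ring.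
  by rewrite cyc_circ // mulr0.
- move=> x Hx; rewrite (bigD1 x) //= cyc_out // /indicator eqxx mulr1 big1 ?addr0 ?subrr //.
  by move=> e /andP [_ ne]; rewrite cyc_out // /indicator eq_sym (negbTE ne) mulr0.
Qed.

Lemma amgm (a d x : R) : 0 < x -> 2 * (a * d) <= x * a ^+ 2 + d ^+ 2 / x.
Proof.
move=> Hx.
have h : x * a ^+ 2 + d ^+ 2 / x - 2 * (a * d) = (x * a - d) ^+ 2 / x.
  by field; rewrite gt_eqF.
have : 0 <= (x * a - d) ^+ 2 / x by rewrite divr_ge0 ?sqr_ge0 ?ltW.
rewrite -h; lra.
Qed.

Lemma key_ineq f : feasible src dst chi f ->
  energy r f - energy r fstar <= \sum_(e | e \notin T) Dl e f ^+ 2 / r e.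
Proof.
move=> Hf.
have Hg : forall c, div (fun e => f e - fstar e) c = 0.
  by move=> c; rewrite div_sub Hf Hfs subrr.
have HE : energy r f = \sum_e (r e * fstar e ^+ 2 + 2 * (r e * fstar e * (f e - fstar e))
     + r e * (f e - fstar e) ^+ 2).
  by rewrite /energy; apply: eq_bigr => e _; ring.
rewrite !big_split /= -mulr_sumr -/(energy r fstar) in HE.
rewrite HE opt // mulr0 addr0 addrAC subrr add0r.
set X := \sum_e r e * (f e - fstar e) ^+ 2.
have HD e : Dl e f = \sum_e' (f e' - fstar e') * r e' * cyc e e'.
  have := Delta_star e; rewrite /Delta => H0.
  rewrite /Delta -[LHS]subr0 -[X in _ - X]H0 -sumrB.
  by apply: eq_bigr => e' _; ring.
have HX : X = \sum_(e | e \notin T) (f e - fstar e) * Dl e f.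
  transitivity (\sum_e' r e' * (f e' - fstar e') *
      (\sum_(e | e \notin T) (f e - fstar e) * cyc e e')).
    by apply: eq_bigr => e' _; rewrite -(decomp Hg); ring.
  under eq_bigr => e' _ do rewrite mulr_sumr.
  rewrite exchange_big /=; apply: eq_bigr => e _; rewrite HD mulr_sumr.
  by apply: eq_bigr => e' _; ring.
have HY : \sum_(e | e \notin T) r e * (f e - fstar e) ^+ 2 <= X.
  rewrite /X [X in _ <= X](bigID (fun e => e \notin T)) /= lerDl.
  by apply: sumr_ge0 => e _; rewrite mulr_ge0 ?sqr_ge0 ?ltW.
have H2 : 2 * X <= \sum_(e | e \notin T) r e * (f e - fstar e) ^+ 2
     + \sum_(e | e \notin T) Dl e f ^+ 2 / r e.
  rewrite {1}HX mulr_sumr -big_split /=; apply: ler_sum => e _; exact: amgm.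
lra.
Qed.
End Energy.

Section Main.
Variables (R : realFieldType) (V E : finType) (src dst : E -> V).
Hypothesis Hne : forall e, src e != dst e.
Variables (r : E -> R) (T : {set E}) (chi : V -> R) (fstar : E -> R).
Hypothesis Hr : forall e, 0 < r e.
Hypothesis Hcon : connected_in src dst T.
Hypothesis Hac : acyclic src dst T.
Hypothesis Hfs : feasible src dst chi fstar.
Hypothesis Hmin : forall f, feasible src dst chi f -> energy r fstar <= energy r f.
Hypothesis He0 : exists e, e \notin T.
Local Notation div := (divergence src dst).
Local Notation cyc := (cycle_vec R src dst T).
Local Notation Dl := (Delta src dst r T).
Local Notation Res := (cycle_res src dst r T).
Local Notation tau := (tau src dst r T).
Local Notation prob := (prob src dst r T).
Local Notation EE := (expected_energy src dst r T).
Local Notation step := (solver_step src dst r T).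

Lemma feas_step f e : feasible src dst chi f -> feasible src dst chi (step f e).
Proof. by move=> Hf c; rewrite /solver_step div_lin Hf cyc_circ // mulr0 subr0. Qed.

Lemma feas_iter (s : seq E) f : feasible src dst chi f ->
  feasible src dst chi (solver_iter src dst r T f s).
Proof. by elim: s f => [|e s IH] f Hf //=; apply: IH; apply: feas_step. Qed.

Lemma res_ge0 e : 0 <= Res e.
Proof. by apply: sumr_ge0 => e' _; rewrite mulr_ge0 ?sqr_ge0 ?ltW. Qed.

Lemma tau_ge1 : 1 <= tau.
Proof.
case: He0 => e0 H0; rewrite /tau (bigD1 e0) //=.
apply: le_trans (_ : Res e0 / r e0 <= _).
  by rewrite ler_pdivlMr // mul1r res_ge.
rewrite lerDl; apply: sumr_ge0 => e _; by rewrite divr_ge0 ?res_ge0 ?ltW.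
Qed.

Lemma tau_gt0 : 0 < tau.
Proof. by apply: lt_le_trans tau_ge1. Qed.

Lemma prob_ge0 e : 0 <= prob e.
Proof.
rewrite /prob; case: ifP => // _.
by rewrite divr_ge0 ?res_ge0 // mulr_ge0 ?ltW ?tau_gt0.
Qed.

Lemma prob_sum : \sum_e prob e = 1.
Proof.
rewrite (bigID (fun e => e \in T)) /= big1 ?add0r; last by move=> e He; rewrite /prob He.
transitivity (\sum_(e | e \notin T) Res e / r e * tau^-1).
  by apply: eq_bigr => e /negbTE He; rewrite /prob He invfM mulrA.
by rewrite -mulr_suml divff // gt_eqF // tau_gt0.
Qed.

Lemma EE0 f : EE f 0 = energy r f.
Proof.
rewrite /expected_energy (big_pred1 [tuple]) => [|t]; last by apply/esym/eqP; exact: tuple0.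
by rewrite big_nil mul1r.
Qed.

Lemma EES f i : EE f i.+1 = \sum_e prob e * EE (step f e) i.
Proof.
rewrite /expected_energy.
rewrite (reindex (fun p : E * i.-tuple E => [tuple of p.1 :: p.2])) /=; last first.
  exists (fun t : i.+1.-tuple E => (thead t, [tuple of behead t])) => [[x t] _ | t _] /=.
    by rewrite theadE; congr pair; apply: val_inj.
  by rewrite [t in RHS]tuple_eta.
symmetry; under eq_bigr => e _ do rewrite mulr_sumr.
rewrite pair_bigA /=; apply: eq_bigr => [[e t]] _ /=.
by rewrite big_cons mulrA.
Qed.

Lemma main_bound i f : feasible src dst chi f ->
  EE f i - energy r fstar <= (1 - tau^-1) ^+ i * (energy r f - energy r fstar).
Proof.
elim: i f => [|i IH] f Hf; first by rewrite EE0 expr0 mul1r.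
rewrite EES.
set q := 1 - tau^-1.
have q0 : 0 <= q by rewrite subr_ge0 invf_le1 ?tau_gt0 ?tau_ge1.
have -> : \sum_e prob e * EE (step f e) i - energy r fstar =
    \sum_e prob e * (EE (step f e) i - energy r fstar).
  rewrite -[X in _ - X]mul1r -prob_sum mulr_suml -sumrB.
  by apply: eq_bigr => e _; ring.
apply: le_trans (_ : \sum_e prob e * (q ^+ i * (energy r (step f e) - energy r fstar)) <= _).
  apply: ler_sum => e _; apply: ler_wpM2l; [exact: prob_ge0 | exact: IH _ (feas_step e Hf)].
have -> : \sum_e prob e * (q ^+ i * (energy r (step f e) - energy r fstar)) =
   q ^+ i * \sum_e prob e * (energy r (step f e) - energy r fstar).
  by rewrite mulr_sumr; apply: eq_bigr => e _; ring.
rewrite exprSr -mulrA; apply: ler_wpM2l; first exact: exprn_ge0.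
set Dsum := \sum_(e | e \notin T) Dl e f ^+ 2 / r e.
have -> : \sum_e prob e * (energy r (step f e) - energy r fstar) =
    (energy r f - energy r fstar) - tau^-1 * Dsum.
  transitivity (\sum_e (prob e * (energy r f - energy r fstar)
      - (if e \notin T then tau^-1 * (Dl e f ^+ 2 / r e) else 0))).
    apply: eq_bigr => e _; rewrite /prob; case: (boolP (e \in T)) => He /=.
      by rewrite !mul0r subr0.
    have Hres : Res e != 0 by rewrite gt_eqF // (lt_le_trans (Hr e)) // res_ge.
    rewrite energy_step //; field.
    by rewrite Hres gt_eqF ?Hr //= gt_eqF ?tau_gt0.
  rewrite sumrB -mulr_suml prob_sum mul1r -big_mkcond /= /Dsum mulr_sumr.
  by [].
have := key_ineq Hne Hr Hcon Hac Hfs Hmin Hf; rewrite -/Dsum => HK.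
have t0 : 0 <= tau^-1 by rewrite invr_ge0 ltW ?tau_gt0.
have : tau^-1 * (energy r f - energy r fstar) <= tau^-1 * Dsum by apply: ler_wpM2l.
rewrite /q; lra.
Qed.
End Main.

Unset Implicit Arguments.

Theorem theorem4p1 (R : realFieldType) (V E : finType) (src dst : E -> V)
  (w : E -> R) (T : {set E}) (chi : V -> R) (f0 fstar : E -> R) :
  (forall e, src e != dst e) ->
  (forall e, 0 < w e) ->
  connected_in src dst [set: E] ->
  spanning_tree src dst T ->
  \sum_a chi a = 0 ->
  (exists e, e \notin T) ->
  (* f0: the feasible flow supported on T *)
  feasible src dst chi f0 -> (forall e, e \notin T -> f0 e = 0) ->
  (* fstar: the feasible flow of minimum energy, r_e = 1 / w_e *)
  feasible src dst chi fstar ->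
  (forall f, feasible src dst chi f ->
     energy (fun e => (w e)^-1) fstar <= energy (fun e => (w e)^-1) f) ->
  let r := fun e => (w e)^-1 in
  (forall (i : nat) (t : i.-tuple E), all (fun e => e \notin T) t ->
     feasible src dst chi (solver_iter src dst r T f0 t)) /\
  (forall i : nat,
     expected_energy src dst r T f0 i - energy r fstar
     <= (1 - (tau src dst r T)^-1) ^+ i * (energy r f0 - energy r fstar)).
Proof.
move=> Hne Hw _ [Hcon Hac] _ He0 Hf0 _ Hfs Hmin r.
have Hr : forall e, 0 < r e by move=> e; rewrite /r invr_gt0.
split.
  by move=> i t _; apply: feas_iter.
by move=> i; apply: main_bound.
Qed.
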